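(* Let $p,q$ be positive integers with $1<q<p-q$ and $\gcd(p,q)=1$, $A=\langle q,p-q\rangle$, $s\in A\setminus\{0\}$, $r$ a positive integer with $1<r<s-r$ and $\gcd(r,s)=1$, $B=\langle r,s-r\rangle$. Let $M$ be the submonoid of $\mathbb{Q}^+$ generated by all $k/r$ ($k\in A$) and all $\frac{k'}{r}(s/r)^n$ ($k'\in B$, $n\ge1$), and $(G,G^+)=(M+(-M),M)$. Then $(G,G^+)$ is order-isomorphic to a direct limit $\varinjlim((\mathbb{Z},G_i^+),f_{i,i+1})$ where each $(\mathbb{Z},G_i^+)$ is a simple component and each $f_{i,i+1}\colon(\mathbb{Z},G_i^+)\to(\mathbb{Z},G_{i+1}^+)$ is an order-embedding given by multiplication by $r$.
   Context: $\langle a_1,\dots,a_k\rangle$ is the submonoid of $\mathbb{Z}^+$ generated by the $a_i$. A simple component is a simple partially ordered abelian group of the form $(\mathbb{Z},P)$ (simple: every nonzero positive element $u$ is an order-unit, i.e. for every $x$ there is $n$ with $-nu\le x\le nu$). An order-embedding is an injective homomorphism $f$ with $f(G^+)=f(G)\cap H^+$. The direct limit carries as positive cone the union of the images of the positive cones. *)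

(* Defs.v *)
From HB Require Import structures.
From mathcomp Require Import all_boot all_order all_algebra.
Set Implicit Arguments. Unset Strict Implicit. Unset Printing Implicit Defensive.
Import Order.TTheory GRing.Theory Num.Theory.
Local Open Scope ring_scope.

Definition nat_mon2 (a b : nat) (k : nat) : Prop :=
  exists m n : nat, k = (m * a + n * b)%N.

Inductive rat_gen_mon (S : rat -> Prop) : rat -> Prop :=
  | rgm_zero : rat_gen_mon S 0
  | rgm_gen x : S x -> rat_gen_mon S x
  | rgm_add x y : rat_gen_mon S x -> rat_gen_mon S y -> rat_gen_mon S (x + y).

(* (Z, P) is a partially ordered abelian group with positive cone P. *)
Definition po_cone (P : int -> Prop) : Prop :=
  [/\ P 0, (forall x y, P x -> P y -> P (x + y)) &
      (forall x, P x -> P (- x) -> x = 0)].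

Definition order_unit (P : int -> Prop) (u : int) : Prop :=
  forall x : int, exists n : nat, P (x + u *+ n) /\ P (u *+ n - x).

Definition simple_component (P : int -> Prop) : Prop :=
  po_cone P /\ (forall u, P u -> u != 0 -> order_unit P u).

Definition order_embedding (P Q : int -> Prop) (f : int -> int) : Prop :=
  [/\ (forall x y, f (x + y) = f x + f y),
      injective f &
      (forall y, (exists x, P x /\ f x = y) <-> ((exists x, f x = y) /\ Q y))].

(* Direct limit of a sequence ((Z, P i), f i : Z -> Z at level i -> i+1),
   realized as the quotient of the disjoint union nat * int (pairs (level, x))
   by the usual equivalence. *)
Fixpoint dl_trans (f : nat -> int -> int) (i n : nat) (x : int) : int :=
  match n with
  | 0 => x
  | n'.+1 => f (i + n')%N (dl_trans f i n' x)
  end.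

Definition dl_lift (f : nat -> int -> int) (k : nat) (a : nat * int) : int :=
  dl_trans f a.1 (k - a.1) a.2.

Definition dl_eq (f : nat -> int -> int) (a b : nat * int) : Prop :=
  exists k : nat, (a.1 <= k)%N /\ (b.1 <= k)%N /\ dl_lift f k a = dl_lift f k b.

Definition dl_add (f : nat -> int -> int) (a b : nat * int) : nat * int :=
  let k := maxn a.1 b.1 in (k, dl_lift f k a + dl_lift f k b).

Definition dl_pos (f : nat -> int -> int) (P : nat -> int -> Prop)
    (a : nat * int) : Prop :=
  exists b : nat * int, dl_eq f a b /\ P b.1 b.2.

(* The direct limit of ((Z, P i), f i) is order-isomorphic to the
   partially ordered subgroup (G, Gp) of Q: phi is a map on representatives
   which is well defined and injective on the quotient, additive, onto G,
   and maps the positive cone exactly onto Gp. *)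
Definition dl_order_iso (f : nat -> int -> int) (P : nat -> int -> Prop)
    (G Gp : rat -> Prop) : Prop :=
  exists phi : nat * int -> rat,
    [/\ (forall a b, phi a = phi b <-> dl_eq f a b),
        (forall a b, phi (dl_add f a b) = phi a + phi b),
        (forall a, G (phi a)),
        (forall g, G g -> exists a, phi a = g) &
        (forall a, dl_pos f P a <-> Gp (phi a))].

(* Main.v *)
Require Import Defs.
From HB Require Import structures.
From mathcomp Require Import all_boot all_order all_algebra.
Import Order.TTheory GRing.Theory Num.Theory.
From mathcomp Require Import ring lra zify.

Lemma coprime_sub (p q : nat) : (q <= p)%N -> coprime p q -> coprime q (p - q).
Proof.
move=> le cpq; rewrite /coprime -gcdnDr subnK // gcdnC; exact: cpq.
Qed.

Lemma sylvester (a b n : nat) : coprime a b -> (0 < a)%N -> (a * b <= n)%N ->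
  exists x y, n = (x * a + y * b)%N.
Proof.
move=> cab a0 le.
set e := (egcdn b a).1.
have hc := chinese_modl cab n 0.
rewrite /chinese mul0n addn0 in hc.
set y := (n * e) %% a.
have ylt : (y < a)%N by rewrite ltn_mod.
have hy : (y * b = n %[mod a])%N.
  by rewrite modnMml -hc mulnAC.
have yb : (y * b <= n)%N.
  apply: leq_trans _ le; rewrite leq_mul2r ltnW ?orbT //.
have : (a %| n - y * b)%N by rewrite -eqn_mod_dvd // hy.
move/dvdnP=> [x hx]. exists x, y.
by rewrite -hx subnK.
Qed.

Lemma mon_mul (N : nat -> Prop) : N 0%N -> (forall x y, N x -> N y -> N (x + y)%N) ->
  forall a x, N a -> N (x * a)%N.
Proof.
move=> N0 NA a x Na; elim: x => [|x IH]; first by rewrite mul0n.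
by rewrite mulSn; apply: (NA).
Qed.

Lemma mon_big (N : nat -> Prop) : N 0%N -> (forall x y, N x -> N y -> N (x + y)%N) ->
  forall g a b, coprime a b -> (0 < a)%N -> N (g * a)%N -> N (g * b)%N ->
  forall x, (a * b <= x)%N -> N (x * g)%N.
Proof.
move=> N0 NA g a b cab a0 Na Nb x le.
have [u [v ->]] := @sylvester _ _ _ cab a0 le.
rewrite mulnDl; apply: (NA).
  rewrite -mulnA (mulnC a). exact: (@mon_mul N N0 NA _ _ Na).
by rewrite -mulnA (mulnC b); exact: (@mon_mul N N0 NA _ _ Nb).
Qed.

Lemma mon_comb (N : nat -> Prop) : N 0%N -> (forall x y, N x -> N y -> N (x + y)%N) ->
  forall g h K1 K2, (forall x, (K1 <= x)%N -> N (x * g)%N) ->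
  (forall y, (K2 <= y)%N -> N (y * h)%N) -> coprime g h -> (0 < g)%N ->
  forall n, (K1 * g + K2 * h + g * h <= n)%N -> N n.
Proof.
move=> N0 NA g h K1 K2 H1 H2 cgh g0 n le.
have le' : (g * h <= n - (K1 * g + K2 * h))%N by lia.
have [u [v hv]] := @sylvester _ _ _ cgh g0 le'.
have -> : n = ((u + K1) * g + (v + K2) * h)%N.
  rewrite !mulnDl; lia.
apply: (NA); [apply: H1 | apply: H2]; lia.
Qed.

Local Open Scope ring_scope.
Ltac fld R0 := field; repeat (apply/andP; split); try apply: expf_neq0; exact: R0.

Lemma t1 (R k : rat) (i : nat) : R != 0 -> (k * R ^+ i) / R ^+ i.+1 = k / R.
Proof. move=> R0. rewrite exprS. fld R0. Qed.
Lemma t2 (R k S : rat) (i : nat) : R != 0 -> (k * S ^+ i) / R ^+ i.+1 = k / R * (S / R) ^+ i.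
Proof. move=> R0. rewrite exprS expr_div_n. fld R0. Qed.

Definition phi (r : nat) (a : nat * int) : rat := a.2%:~R / r%:R ^+ a.1.+1.

Lemma dl_trans_r (r : nat) i n (x : int) :
  dl_trans (fun _ (x : int) => r%:Z * x) i n x = r%:Z ^+ n * x.
Proof. elim: n => [|n IH] /=; first by rewrite mul1r. by rewrite IH exprS mulrA. Qed.

Lemma phi_lift (r : nat) k a : (0 < r)%N -> (a.1 <= k)%N ->
  phi r (k, dl_lift (fun _ (x : int) => r%:Z * x) k a) = phi r a.
Proof.
move=> r0 le; rewrite /phi /dl_lift dl_trans_r /= rmorphM rmorphXn /=.
have R0 : (r%:R : rat) != 0 by rewrite pnatr_eq0 -lt0n.
have -> : k.+1 = ((k - a.1) + a.1.+1)%N by lia.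
rewrite exprD. change ((r%:Z)%:~R : rat) with (r%:R : rat). fld R0.
Qed.

Lemma phi_inj (r : nat) k x y : (0 < r)%N -> phi r (k, x) = phi r (k, y) -> x = y.
Proof.
move=> r0; rewrite /phi /=.
have R0 : (r%:R : rat) ^+ k.+1 != 0 by rewrite expf_neq0 // pnatr_eq0 -lt0n.
move=> e; apply: (@intr_inj rat); apply: (mulIf (invr_neq0 R0)); exact: e.
Qed.

Lemma phiD (r : nat) k x y : phi r (k, x + y) = phi r (k, x) + phi r (k, y).
Proof. by rewrite /phi /= rmorphD mulrDl. Qed.
Lemma phiB (r : nat) k x y : phi r (k, x - y) = phi r (k, x) - phi r (k, y).
Proof. by rewrite /phi /= rmorphB mulrBl. Qed.
Lemma phi0 (r : nat) k : phi r (k, 0) = 0.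
Proof. by rewrite /phi /= mul0r. Qed.
Lemma phiS (r : nat) i x : (0 < r)%N -> phi r (i.+1, r%:Z * x) = phi r (i, x).
Proof.
move=> r0; have R0 : (r%:R : rat) != 0 by rewrite pnatr_eq0 -lt0n.
rewrite /phi /= rmorphM /= exprS. change ((r%:Z)%:~R : rat) with (r%:R : rat). fld R0.
Qed.
Lemma phi_nat (r : nat) i (m : nat) : phi r (i, m%:Z) = m%:R / r%:R ^+ i.+1.
Proof. by []. Qed.

Lemma gen_nonneg (S : rat -> Prop) : (forall x, S x -> 0 <= x) ->
  forall x, rat_gen_mon S x -> 0 <= x.
Proof.
move=> HS x; elim=> [|y Sy|y z _ Hy _ Hz]; [done | exact: HS | exact: addr_ge0].
Qed.

Theorem proposition2p4 (p q s r : nat) :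
  (1 < q)%N -> (q < p - q)%N -> coprime p q ->
  nat_mon2 q (p - q) s -> (s != 0)%N ->
  (1 < r)%N -> (r < s - r)%N -> coprime r s ->
  let M : rat -> Prop :=
    rat_gen_mon (fun x : rat =>
      (exists k : nat, nat_mon2 q (p - q) k /\ x = k%:R / r%:R) \/
      (exists (k' n : nat), nat_mon2 r (s - r) k' /\ (1 <= n)%N /\
          x = k'%:R / r%:R * (s%:R / r%:R) ^+ n)) in
  let G : rat -> Prop := fun g => exists m1 m2, M m1 /\ M m2 /\ g = m1 - m2 in
  exists P : nat -> int -> Prop,
    [/\ (forall i, simple_component (P i)),
        (forall i, order_embedding (P i) (P i.+1) (fun x : int => r%:Z * x)) &
        dl_order_iso (fun _ (x : int) => r%:Z * x) P G M].
Proof.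
move=> q1 qpq cpq _ s0 r1 rsr crs M G.
have r0 : (0 < r)%N by lia.
have R0 : (r%:R : rat) != 0 by rewrite pnatr_eq0 -lt0n.
have Mnn : forall x, M x -> 0 <= x.
  apply: gen_nonneg => x [[k [_ ->]]|[k' [n [_ [_ ->]]]]].
    by rewrite divr_ge0.
  by rewrite mulr_ge0 ?exprn_ge0 ?divr_ge0.
have Madd : forall x y, M x -> M y -> M (x + y) by move=> x y; exact: rgm_add.
have Mbig : forall i, exists T : nat, forall m : nat, (T <= m)%N ->
    M (m%:R / r%:R ^+ i.+1).
  move=> i.
  pose N m := M (m%:R / r%:R ^+ i.+1).
  have N0 : N 0%N by rewrite /N mul0r; exact: rgm_zero.
  have NA : forall x y, N x -> N y -> N (x + y)%N.
    by move=> x y Nx Ny; rewrite /N natrD mulrDl; apply: Madd.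
  have genA : forall k, nat_mon2 q (p - q) k -> N (r ^ i * k)%N.
    move=> k hk; rewrite /N natrM natrX [_ ^+ i * _]mulrC t1 //.
    by apply: rgm_gen; left; exists k.
  have cA : coprime q (p - q) by apply: coprime_sub => //; lia.
  have hA : forall x, (q * (p - q) <= x)%N -> N (x * r ^ i)%N.
    apply: (@mon_big N N0 NA _ q (p - q) cA) => //; first lia.
      by apply: genA; exists 1%N, 0%N; lia.
    by apply: genA; exists 0%N, 1%N; lia.
  case: i => [|i] in N N0 NA genA hA *.
    by exists (q * (p - q))%N => m hm; have := hA m hm; rewrite expn0 muln1.
  have genB : forall k, nat_mon2 r (s - r) k -> N (s ^ i.+1 * k)%N.
    move=> k hk; rewrite /N natrM natrX [_ ^+ i.+1 * _]mulrC t2 //.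
    by apply: rgm_gen; right; exists k, i.+1.
  have cB : coprime r (s - r) by apply: coprime_sub; [lia | rewrite coprime_sym].
  have hB : forall x, (r * (s - r) <= x)%N -> N (x * s ^ i.+1)%N.
    apply: (@mon_big N N0 NA _ r (s - r) cB) => //.
      by apply: genB; exists 1%N, 0%N; lia.
    by apply: genB; exists 0%N, 1%N; lia.
  exists (q * (p - q) * r ^ i.+1 + r * (s - r) * s ^ i.+1 + r ^ i.+1 * s ^ i.+1)%N.
  move=> m hm; apply: (@mon_comb N N0 NA _ _ _ _ hA hB) => //.
    by apply: coprimeXl; apply: coprimeXr.
  by rewrite expn_gt0 r0.
have Mbig' : forall i, exists T : nat, forall z : int, T%:Z <= z -> M (phi r (i, z)).
  move=> i; have [T HT] := Mbig i; exists T => z hz.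
  have z0 : 0 <= z by apply: le_trans hz.
  rewrite -(gez0_abs z0) phi_nat; apply: HT.
  by rewrite -lez_nat gez0_abs.
have MD : forall x, M x -> exists j (z : int), x = phi r (j, z).
  move=> x; elim=> [|y [[k [_ ->]]|[k' [n [_ [_ ->]]]]]|y z _ [j1 [z1 ->]] _ [j2 [z2 ->]]].
  - by exists 0%N, 0; rewrite phi0.
  - by exists 0%N, k%:Z; rewrite phi_nat expr1.
  - exists n, (k' * s ^ n)%N%:Z; rewrite phi_nat natrM natrX t2 //.
  - set k := maxn j1 j2; exists k.
    rewrite -(@phi_lift r k (j1, z1)) ?leq_maxl // -(@phi_lift r k (j2, z2)) ?leq_maxr //.
    by rewrite -phiD; eexists.
have Heq : forall a b, phi r a = phi r b <-> dl_eq (fun _ (x : int) => r%:Z * x) a b.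
  move=> a b; split.
    move=> e; exists (maxn a.1 b.1); rewrite leq_maxl leq_maxr; split => //; split => //.
    apply: (@phi_inj r (maxn a.1 b.1)) => //.
    by rewrite !phi_lift ?leq_maxl ?leq_maxr.
  move=> [k0 [h1 [h2 e]]].
  by rewrite -(@phi_lift r _ _ r0 h1) -(@phi_lift r _ _ r0 h2) e.
exists (fun i x => M (phi r (i, x))); split.
- move=> i; split.
    split.
    + by rewrite phi0; exact: rgm_zero.
    + by move=> x y Hx Hy; rewrite phiD; apply: Madd.
    + move=> x Hx Hnx; apply: (@phi_inj r i) => //.
      rewrite phi0; apply/eqP; rewrite eq_le Mnn // andbT.
      have := Mnn _ Hnx; rewrite -[- x]sub0r phiB phi0 sub0r oppr_ge0 //.
  move=> u Hu u0 x.
  have upos : 0 < u.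
    rewrite lt_def u0 /=; have := Mnn _ Hu; rewrite /phi /=.
    rewrite pmulr_lge0 ?invr_gt0 ?exprn_gt0 ?ltr0n // ler0z //.
  have [T HT] := Mbig' i.
  exists (T + `|x|)%N.
  have h1 : ((T + `|x|)%N%:Z) <= u *+ (T + `|x|).
    rewrite -mulr_natr natz; set t := ((T + `|x|)%N)%:Z.
    have : 0 <= t by [].
    move=> t0; nia.
  have ha : (`|x|%N)%:Z = `|x| by rewrite abszE.
  have hx1 : x <= `|x| := ler_norm x.
  have hx2 : - x <= `|x| by rewrite -normrN ler_norm.
  rewrite PoszD ha in h1; move: h1; set w := u *+ _ => h1.
  split; apply: HT; lia.
- move=> i; split.
  + by move=> x y; rewrite mulrDr.
  + apply: mulfI; rewrite eqz_nat -lt0n //.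
  + move=> y; split.
      by move=> [x [Hx <-]]; split; [exists x | rewrite phiS].
    move=> [[x ex] Hy]; exists x; split => //.
    by rewrite -ex phiS in Hy.
- exists (phi r); split.
  + exact: Heq.
  + move=> a b; rewrite /dl_add phiD.
    by rewrite !phi_lift ?leq_maxl ?leq_maxr.
  + move=> a; have [T HT] := Mbig' a.1.
    set c := T%:Z + `|a.2|.
    exists (phi r (a.1, a.2 + c)), (phi r (a.1, c)); split; [|split].
    * apply: HT; rewrite /c; have := ler_norm a.2; have := ler_normr a.2; lia.
    * apply: HT; rewrite /c; lia.
    * by rewrite phiD addrK; case: a {c HT}.
  + move=> g [m1 [m2 [H1 [H2 ->]]]].
    have [j1 [z1 ->]] := MD _ H1; have [j2 [z2 ->]] := MD _ H2.
    set k := maxn j1 j2.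
    rewrite -(@phi_lift r k (j1, z1)) ?leq_maxl // -(@phi_lift r k (j2, z2)) ?leq_maxr //.
    by rewrite -phiB; eexists.
  + move=> a; split.
      by move=> [b [e Pb]]; rewrite (proj2 (Heq a b) e); case: b e Pb.
    by move=> Ha; exists a; split; [apply/Heq | case: a Ha].
Qed.
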